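(* Consider the complex-valued protocol. Let $\mathcal F$ be a Banach function space compactly embedded in $C(\mathbf X)$ and let $L,M\in[1,\infty)$ be such that $\mathcal H_\epsilon(U_{\mathcal F})\le L\log^M\frac1\epsilon$ for all $\epsilon\in(0,1/2]$. There exists a strategy for Predictor that guarantees, for all $N=2,3,\dots$, all $F\in\mathcal F$ and all moves of Reality, $$\sum_{n=1}^N|y_n-\mu_n|^2\le\sum_{n=1}^N|y_n-F(x_n)|^2+C_ML\left(\log^+\|F\|_{\mathcal F}+\log N\right)^M,$$ where $C_M$ is a constant depending only on $M$.
   Context: Complex-valued protocol: $\mathbf X$ a nonempty topological space; at each round $n$ Reality announces $x_n\in\mathbf X$, Predictor announces $\mu_n\in\mathbb C$, Reality announces $y_n\in\mathbb C$ with $|y_n|\le1$; a strategy for Predictor maps each history to $\mu_n$. $C(\mathbf X)$: bounded continuous complex-valued functions on $\mathbf X$ with the supremum norm. A Banach function space compactly embedded in $C(\mathbf X)$: a linear subspace $\mathcal F\subseteq C(\mathbf X)$ with a norm $\|\cdot\|_{\mathcal F}$ making it a Banach space whose unit ball $U_{\mathcal F}$ is compact in $C(\mathbf X)$. $\mathcal H_\epsilon(A)$: $\log_2$ of the minimal number of points of $A$ forming an $\epsilon$-net for $A$ in the supremum metric. $\log=\log_2$; $\log^+t=\log t$ if $t\ge1$ and $0$ otherwise. *)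

(* Defs.v *)
From HB Require Import structures.
From mathcomp Require Import all_boot all_order all_algebra.
From mathcomp Require Import all_classical all_reals all_analysis.
From mathcomp Require Import complex.
Set Implicit Arguments. Unset Strict Implicit. Unset Printing Implicit Defensive.
Import Order.TTheory GRing.Theory Num.Theory.
Import numFieldNormedType.Exports.
Local Open Scope classical_set_scope.
Local Open Scope ring_scope.

Section Defs.
Variable R : realType.

Definition cmod (z : R[i]) : R := ComplexField.Normc.normc z.

Definition log2 (t : R) : R := ln t / ln 2.
Definition logp (t : R) : R := if 1 <= t then log2 t else 0.

Variable X : topologicalType.

(* C(X): bounded continuous complex-valued functions on X
   (continuity of a complex-valued map = continuity of its real and
   imaginary parts, R[i] carrying the product topology of R x R) *)
Definition CX (f : X -> R[i]) : Prop :=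
  continuous (fun x => complex.Re (f x) : R) /\ continuous (fun x => complex.Im (f x) : R) /\
  exists B : R, forall x, cmod (f x) <= B.

Definition supdist (f g : X -> R[i]) : R :=
  sup [set cmod (f x - g x) | x in [set: X]].

Definition sup_open (O : set (X -> R[i])) : Prop :=
  O `<=` CX /\
  forall f, O f -> exists2 r : R, 0 < r &
    forall g, CX g -> supdist f g < r -> O g.

Definition sup_compact (K : set (X -> R[i])) : Prop :=
  K `<=` CX /\
  forall (I : Type) (O : I -> set (X -> R[i])),
    (forall i, sup_open (O i)) -> K `<=` \bigcup_(i in [set: I]) O i ->
    exists (n : nat) (g : 'I_n -> I), K `<=` \bigcup_(k in [set: 'I_n]) O (g k).

Definition banach_compact_embedded (Fs : set (X -> R[i]))
    (nF : (X -> R[i]) -> R) : Prop :=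
  Fs `<=` CX /\
      Fs (fun _ => 0) /\
      (forall f g, Fs f -> Fs g -> Fs (fun x => f x + g x)) /\
      (forall (a : R[i]) f, Fs f -> Fs (fun x => a * f x)) /\
      (forall f, Fs f -> 0 <= nF f /\ (nF f = 0 <-> f = (fun _ => 0))) /\
      (forall (a : R[i]) f, Fs f -> nF (fun x => a * f x) = cmod a * nF f) /\
      (forall f g, Fs f -> Fs g -> nF (fun x => f x + g x) <= nF f + nF g) /\
      (forall u : nat -> (X -> R[i]), (forall n, Fs (u n)) ->
         (forall e : R, 0 < e -> exists N, forall m n, (N <= m)%N -> (N <= n)%N ->
             nF (fun x => u m x - u n x) < e) ->
         exists2 f, Fs f & forall e : R, 0 < e -> exists N, forall n, (N <= n)%N ->
             nF (fun x => u n x - f x) < e) /\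
      (* compact embedding: the unit ball is compact in C(X) *)
      sup_compact [set f | Fs f /\ nF f <= 1].

Definition unit_ball (Fs : set (X -> R[i])) (nF : (X -> R[i]) -> R) :=
  [set f | Fs f /\ nF f <= 1].

Definition has_net (A : set (X -> R[i])) (eps : R) (n : nat) : Prop :=
  exists g : 'I_n -> (X -> R[i]),
    (forall k, A (g k)) /\ forall f, A f -> exists k, supdist f (g k) <= eps.

Definition entropy (A : set (X -> R[i])) (eps : R) : R :=
  log2 (inf [set (n%:R : R) | n in [set n | has_net A eps n]]).

(* strategies for Predictor: history of past (x_k, y_k) and current x_n *)
Definition strategy := seq (X * R[i]) -> X -> R[i].

(* Predictor's move at round n (rounds indexed from 0) *)
Definition pred_move (S : strategy) (x : nat -> X) (y : nat -> R[i]) (n : nat) :=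
  S [seq (x k, y k) | k <- iota 0 n] (x n).

End Defs.

(* Main.v *)
Require Import Defs.
From HB Require Import structures.
From mathcomp Require Import all_boot all_order all_algebra.
From mathcomp Require Import all_classical all_reals all_analysis.
From mathcomp Require Import complex.
From mathcomp Require Import ring lra zify.
Import Order.TTheory GRing.Theory Num.Theory.
Import numFieldNormedType.Exports.
Local Open Scope classical_set_scope.
Local Open Scope ring_scope.
Set Implicit Arguments. Unset Strict Implicit. Unset Printing Implicit Defensive.

Lemma exp_tangent (R : realType) (s D : R) : s <= 2^-1 -> 2 * s ^+ 2 <= D ->
  expR (- (s + D)) <= 1 - s.
Proof.
move=> hs hD.
have h1 : 1 + (s + D) <= expR (s + D) by exact: expR_ge1Dx.
have hp : 0 < 1 + (s + D) by nra.
rewrite expRN.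
have hpos : 0 < expR (s + D) := expR_gt0 _.
rewrite -[X in X <= _]mul1r ler_pdivrMr //.
have : 1 <= (1 - s) * (1 + (s + D)) by nra.
move=> h; apply: (le_trans h); apply: ler_wpM2l; lra.
Qed.

Lemma tangent2 (R : realType) (y1 y2 m1 m2 p1 p2 : R) :
  -1 <= y1 <= 1 -> -1 <= y2 <= 1 -> -1 <= m1 <= 1 -> -1 <= m2 <= 1 ->
  -1 <= p1 <= 1 -> -1 <= p2 <= 1 ->
  expR (- (((y1 - p1) ^+ 2 + (y2 - p2) ^+ 2) / 64)) <=
  expR (- (((y1 - m1) ^+ 2 + (y2 - m2) ^+ 2) / 64)) *
    (1 - ((y1 - m1) * (m1 - p1) + (y2 - m2) * (m2 - p2)) / 32).
Proof.
move=> /andP[y1l y1u] /andP[y2l y2u] /andP[m1l m1u] /andP[m2l m2u] /andP[p1l p1u] /andP[p2l p2u].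
set b1 := y1 - m1; set b2 := y2 - m2; set d1 := m1 - p1; set d2 := m2 - p2.
set u := b1 * d1 + b2 * d2.
have ha : y1 - p1 = b1 + d1 by rewrite /b1 /d1; ring.
have hb : y2 - p2 = b2 + d2 by rewrite /b2 /d2; ring.
rewrite ha hb.
have -> : - (((b1 + d1) ^+ 2 + (b2 + d2) ^+ 2) / 64) =
   - ((b1 ^+ 2 + b2 ^+ 2) / 64) + - (u / 32 + (d1 ^+ 2 + d2 ^+ 2) / 64).
  by rewrite /u; field.
rewrite expRD ler_wpM2l ?expR_ge0 //.
have hb1 : b1 ^+ 2 <= 4 by rewrite /b1; nra.
have hb2 : b2 ^+ 2 <= 4 by rewrite /b2; nra.
have hd1 : d1 ^+ 2 <= 4 by rewrite /d1; nra.
have hd2 : d2 ^+ 2 <= 4 by rewrite /d2; nra.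
have cs : u ^+ 2 <= (b1 ^+ 2 + b2 ^+ 2) * (d1 ^+ 2 + d2 ^+ 2).
  have := sqr_ge0 (b1 * d2 - b2 * d1); rewrite /u; nra.
have hu2 : u ^+ 2 <= 8 * (d1 ^+ 2 + d2 ^+ 2) by nra.
have hu : u <= 8 by nra.
apply: exp_tangent; first lra.
nra.
Qed.



Definition lossc (R : realType) (y m : R[i]) : R :=
  (complex.Re y - complex.Re m) ^+ 2 + (complex.Im y - complex.Im m) ^+ 2.

Arguments lossc : simpl never.

Definition insq (R : realType) (z : R[i]) : Prop :=
  -1 <= complex.Re z <= 1 /\ -1 <= complex.Im z <= 1.

Lemma le_sum_mem (R : realType) (E : eqType) (U : seq E) (F : E -> R) e0 :
  (forall e, 0 <= F e) -> e0 \in U -> F e0 <= \sum_(e <- U) F e.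
Proof.
move=> F0; elim: U => // a U IH; rewrite in_cons big_cons => /orP[/eqP->|h].
  by rewrite lerDl sumr_ge0.
by apply: (le_trans (IH h)); rewrite lerDr.
Qed.

Definition potq (R : realType) (E : Type) (w : E -> R) (pi : E -> nat -> R[i])
  (y : nat -> R[i]) (n : nat) (e : E) : R :=
  w e * expR (- ((\sum_(t < n) lossc (y t) (pi e t)) / 64)).

Lemma aggregate (R : realType) (E : eqType) (U : seq E) (w : E -> R)
  (pi : E -> nat -> R[i]) (y mu : nat -> R[i]) (N : nat) :
  (forall e, 0 <= w e) ->
  (forall n, insq (y n)) -> (forall n, insq (mu n)) -> (forall e n, insq (pi e n)) ->
  (forall n, (n < N)%N ->
     (\sum_(e <- U) potq w pi y n e) * complex.Re (mu n) =
        \sum_(e <- U) potq w pi y n e * complex.Re (pi e n) /\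
     (\sum_(e <- U) potq w pi y n e) * complex.Im (mu n) =
        \sum_(e <- U) potq w pi y n e * complex.Im (pi e n)) ->
  forall e0, e0 \in U -> 0 < w e0 ->
  \sum_(n < N) lossc (y n) (mu n) <=
  \sum_(n < N) lossc (y n) (pi e0 n) + 64 * (ln (\sum_(e <- U) w e) - ln (w e0)).
Proof.
move=> w0 hy hmu hpi hmix e0 e0U we0.
pose Phi n := \sum_(e <- U) potq w pi y n e.
have q0 : forall n e, 0 <= potq w pi y n e.
  by move=> n e; rewrite /potq mulr_ge0 ?expR_ge0.
have step : forall n, (n < N)%N ->
    Phi n.+1 <= expR (- (lossc (y n) (mu n) / 64)) * Phi n.
  move=> n nN; rewrite /Phi.
  have -> : \sum_(e <- U) potq w pi y n.+1 e =
     \sum_(e <- U) potq w pi y n e * expR (- (lossc (y n) (pi e n) / 64)).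
    apply: eq_bigr => e _; rewrite /potq big_ord_recr /= -mulrA -expRD; congr (_ * expR _).
    by rewrite mulrDl opprD.
  apply: (@le_trans _ _ (\sum_(e <- U) potq w pi y n e *
     (expR (- (lossc (y n) (mu n) / 64)) *
      (1 - ((complex.Re (y n) - complex.Re (mu n)) * (complex.Re (mu n) - complex.Re (pi e n)) +
            (complex.Im (y n) - complex.Im (mu n)) * (complex.Im (mu n) - complex.Im (pi e n))) / 32)))).
    apply: ler_sum => e _; apply: ler_wpM2l => //.
    case: (hy n) => ? ?; case: (hmu n) => ? ?; case: (hpi e n) => ? ?.
    exact: tangent2.
  have [hre him] := hmix n nN.
  set a := expR _.
  set Y1 := complex.Re (y n); set Y2 := complex.Im (y n).
  set M1 := complex.Re (mu n); set M2 := complex.Im (mu n).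
  set S := \sum_(e <- U) potq w pi y n e.
  rewrite -/S in hre him.
  have -> : \sum_(e <- U) potq w pi y n e *
     (a * (1 - ((Y1 - M1) * (M1 - complex.Re (pi e n)) + (Y2 - M2) * (M2 - complex.Im (pi e n))) / 32))
     = a * (S - ((Y1 - M1) * (M1 * S - \sum_(e <- U) potq w pi y n e * complex.Re (pi e n))
                + (Y2 - M2) * (M2 * S - \sum_(e <- U) potq w pi y n e * complex.Im (pi e n))) / 32).
    rewrite (eq_bigr (fun e => (a * (1 - ((Y1 - M1) * M1 + (Y2 - M2) * M2) / 32)) * potq w pi y n e
        + (a * (Y1 - M1) / 32) * (potq w pi y n e * complex.Re (pi e n))
        + (a * (Y2 - M2) / 32) * (potq w pi y n e * complex.Im (pi e n)))); last first.
      by move=> e _; ring.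
    rewrite !big_split /= -!mulr_sumr /S; ring.
  by rewrite -hre -him [M1 * S]mulrC [M2 * S]mulrC !subrr !mulr0 addr0 mul0r subr0.
have ind : forall n, (n <= N)%N ->
    Phi n <= expR (- ((\sum_(t < n) lossc (y t) (mu t)) / 64)) * Phi 0%N.
  elim=> [|n IH] hn.
    by rewrite big_ord0 mul0r oppr0 expR0 mul1r.
  apply: (le_trans (step n hn)).
  have -> : expR (- ((\sum_(t < n.+1) lossc (y t) (mu t)) / 64)) =
      expR (- (lossc (y n) (mu n) / 64)) * expR (- ((\sum_(t < n) lossc (y t) (mu t)) / 64)).
    by rewrite -expRD big_ord_recr /= mulrDl opprD addrC.
  by rewrite -mulrA ler_wpM2l ?expR_ge0 //; apply: IH; apply: ltnW.
have HN := ind N (leqnn N).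
have Phi0 : Phi 0%N = \sum_(e <- U) w e.
  by apply: eq_bigr => e _; rewrite /potq big_ord0 mul0r oppr0 expR0 mulr1.
rewrite Phi0 in HN.
have low : potq w pi y N e0 <= Phi N by apply: le_sum_mem.
have := le_trans low HN; rewrite /potq.
set L0 := \sum_(t < N) lossc (y t) (pi e0 t).
set Lm := \sum_(t < N) lossc (y t) (mu t).
set W := \sum_(e <- U) w e.
have Wpos : 0 < W by apply: (lt_le_trans we0); apply: le_sum_mem.
move=> h.
have p1 : 0 < w e0 * expR (- (L0 / 64)) by rewrite mulr_gt0 ?expR_gt0.
have p2 : 0 < expR (- (Lm / 64)) * W by rewrite mulr_gt0 ?expR_gt0.
have h2 : ln (w e0 * expR (- (L0 / 64))) <= ln (expR (- (Lm / 64)) * W).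
  by rewrite ler_ln.
rewrite lnM ?posrE ?expR_gt0 // in h2.
rewrite lnM ?posrE ?expR_gt0 // in h2.
rewrite !expRK in h2.
lra.
Qed.



Lemma cmod_sqr (R : realType) (z : R[i]) :
  cmod z ^+ 2 = complex.Re z ^+ 2 + complex.Im z ^+ 2.
Proof. by case: z => a b; rewrite /cmod /= sqr_sqrtr // addr_ge0 // sqr_ge0. Qed.

Lemma cmod_ge0 (R : realType) (z : R[i]) : 0 <= cmod z.
Proof. by case: z => a b; rewrite /cmod /= sqrtr_ge0. Qed.

Lemma Re_le_cmod (R : realType) (z : R[i]) : `|complex.Re z| <= cmod z.
Proof.
by case: z => a b; rewrite /cmod /= -sqrtr_sqr ler_wsqrtr // lerDl sqr_ge0.
Qed.

Lemma Im_le_cmod (R : realType) (z : R[i]) : `|complex.Im z| <= cmod z.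
Proof.
by case: z => a b; rewrite /cmod /= -sqrtr_sqr ler_wsqrtr // lerDr sqr_ge0.
Qed.

Lemma cmodD (R : realType) (a b : R[i]) : cmod (a + b) <= cmod a + cmod b.
Proof. exact: le_normcD. Qed.

Lemma cmodB (R : realType) (a b : R[i]) : cmod (a - b) = cmod (b - a).
Proof. by rewrite /cmod -normcN opprB. Qed.

Lemma cmodM (R : realType) (a b : R[i]) : cmod (a * b) = cmod a * cmod b.
Proof. exact: ComplexField.Normc.normcM. Qed.

Lemma cmod_real (R : realType) (r : R) : cmod (r%:C)%C = `|r|.
Proof. by rewrite /cmod /= expr0n /= addr0 sqrtr_sqr. Qed.

Lemma cmod0 (R : realType) : cmod (0 : R[i]) = 0.
Proof. exact: ComplexField.Normc.normc0. Qed.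

Lemma insq_y (R : realType) (z : R[i]) : cmod z <= 1 -> insq z.
Proof.
move=> h; split; rewrite -ler_norml.
  exact: le_trans (Re_le_cmod z) h.
exact: le_trans (Im_le_cmod z) h.
Qed.

Lemma CX_bounded_diff (R : realType) (X : topologicalType) (f g : X -> R[i]) :
  CX f -> CX g -> has_ubound [set cmod (f x - g x) | x in [set: X]].
Proof.
move=> [_ [_ [B1 h1]]] [_ [_ [B2 h2]]]; exists (B1 + B2) => _ [x _ <-].
apply: (le_trans (cmodD _ _)); apply: lerD; first exact: h1.
by rewrite /cmod normcN; exact: h2.
Qed.

Lemma supdist_ub (R : realType) (X : topologicalType) (f g : X -> R[i]) :
  CX f -> CX g -> forall x, cmod (f x - g x) <= supdist f g.
Proof.
move=> hf hg x; apply: ub_le_sup; first exact: CX_bounded_diff.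
by exists x.
Qed.

Lemma supdist_le (R : realType) (X : topologicalType) (f g : X -> R[i]) (b : R) :
  0 <= b -> (forall x, cmod (f x - g x) <= b) -> supdist f g <= b.
Proof.
move=> b0 h; rewrite /supdist.
have [ne|e] := pselect ([set cmod (f x - g x) | x in [set: X]] !=set0).
  by apply: ge_sup => // _ [x _ <-]; exact: h.
rewrite (_ : [set _ | x in _] = set0) ?sup0 //.
apply/seteqP; split => // r hr; apply: e; by exists r.
Qed.

Lemma supdist_ge0 (R : realType) (X : topologicalType) (f g : X -> R[i]) :
  CX f -> CX g -> 0 <= supdist f g.
Proof.
move=> hf hg; rewrite /supdist.
have [[r [x _ _]]|e] := pselect ([set cmod (f x - g x) | x in [set: X]] !=set0).
  exact: le_trans (cmod_ge0 _) (supdist_ub hf hg x).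
rewrite (_ : [set _ | x in _] = set0) ?sup0 //.
apply/seteqP; split => // r hr; apply: e; by exists r.
Qed.

Lemma supdist_sym (R : realType) (X : topologicalType) (f g : X -> R[i]) :
  supdist f g = supdist g f.
Proof.
rewrite /supdist; congr sup; apply/seteqP; split => _ [x _ <-]; exists x => //;
  by rewrite cmodB.
Qed.

Lemma supdist_tri (R : realType) (X : topologicalType) (f g h : X -> R[i]) :
  CX f -> CX g -> CX h -> supdist f h <= supdist f g + supdist g h.
Proof.
move=> hf hg hh; apply: supdist_le.
  by rewrite addr_ge0 // supdist_ge0.
move=> x.
have -> : f x - h x = (f x - g x) + (g x - h x) by rewrite addrA subrK.
apply: (le_trans (cmodD _ _)); apply: lerD; exact: supdist_ub.
Qed.

Lemma supdist_self (R : realType) (X : topologicalType) (f : X -> R[i]) :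
  supdist f f <= 0.
Proof. by apply: supdist_le => // x; rewrite subrr cmod0. Qed.

Lemma net_exists (R : realType) (X : topologicalType) (U : set (X -> R[i]))
  (f0 : X -> R[i]) (eps : R) :
  sup_compact U -> U f0 -> 0 < eps -> exists n, has_net U eps n.
Proof.
move=> [UCX cpt] Uf0 e0.
pose O (f : X -> R[i]) := [set g | U f /\ CX g /\ supdist f g < eps].
have Oopen : forall f, sup_open (O f).
  move=> f; split; first by move=> g [_ []].
  move=> g [Uf [CXg dfg]]; exists (eps - supdist f g); first by rewrite subr_gt0.
  move=> h CXh dgh; split => //; split => //.
  apply: (le_lt_trans (supdist_tri (UCX f Uf) CXg CXh)).
  by rewrite -ltrBrDl.
have cov : U `<=` \bigcup_(i in [set: X -> R[i]]) O i.
  move=> g Ug; exists g => //; split => //; split; first exact: UCX.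
  exact: le_lt_trans (supdist_self g) e0.
have [n [G HG]] := cpt _ O Oopen cov.
exists n.
pose g' k := if pselect (U (G k)) then G k else f0.
exists g'; split.
  by move=> k; rewrite /g'; destruct (pselect (U (G k))).
move=> f Uf; have [k _ [UGk [_ hk]]] := HG f Uf.
exists k; rewrite /g'; destruct (pselect (U (G k))) as [h|h] => //.
by rewrite supdist_sym ltW.
Qed.

Lemma good_net (R : realType) (X : topologicalType) (U : set (X -> R[i]))
  (f0 : X -> R[i]) (eps b : R) :
  (exists n, has_net U eps n) -> U f0 -> entropy U eps <= b ->
  exists n, (0 < n)%N /\ has_net U eps n /\ ln (n%:R : R) <= b * ln 2.
Proof.
move=> [m hm] Uf0 hent.
have [n0 [hn0 hmin]] := @nat_has_minimum [set n | has_net U eps n] (ex_intro _ m hm).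
have n0pos : (0 < n0)%N.
  case: n0 hn0 hmin => // -[g [_ hg]] _.
  by have [[k hk] _] := hg f0 Uf0.
exists n0; split => //; split => //.
set S := [set (n%:R : R) | n in [set n | has_net U eps n]].
have hinf : inf S = n0%:R.
  apply/le_anti/andP; split.
    apply: ge_inf; last by exists n0.
    by exists n0%:R => _ [k hk <-]; rewrite ler_nat; apply: hmin.
  apply: lb_le_inf; first by exists n0%:R, n0.
  by move=> _ [k hk <-]; rewrite ler_nat; apply: hmin.
move: hent; rewrite /entropy -/S hinf /log2.
have ln2 : 0 < ln (2 : R) by rewrite ln_gt0 // ltr1n.
by rewrite ler_pdivrMr.
Qed.



Definition layer (s : nat -> nat) (t : nat) : seq (nat * nat * nat) :=
  [seq (t, k, i) | k <- iota 0 t.+1, i <- iota 0 (s t)].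

Definition univ (s : nat -> nat) (n : nat) : seq (nat * nat * nat) :=
  flatten [seq layer s t | t <- iota 0 n.+1].

Lemma univ_split (s : nat -> nat) (n N : nat) : (n <= N)%N ->
  univ s N = univ s n ++ flatten [seq layer s t | t <- iota n.+1 (N - n)].
Proof.
move=> hn; rewrite /univ -flatten_cat -map_cat.
by rewrite -(add0n n.+1) -iotaD add0n addSn subnKC.
Qed.

Lemma mem_layer (s : nat -> nat) t e : e \in layer s t ->
  [/\ e.1.1 = t, (e.1.2 <= t)%N & (e.2 < s t)%N].
Proof.
move=> /allpairsP[[k i] []]; rewrite !mem_iota => hk hi ->.
move: hk hi; rewrite /= !add0n => hk hi; split => //; lia.
Qed.

Lemma mem_rest (s : nat -> nat) a b e :
  e \in flatten [seq layer s t | t <- iota a b] -> (a <= e.1.1)%N.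
Proof.
move=> /flatten_mapP[t ht /mem_layer[-> _ _]].
by rewrite mem_iota in ht; case/andP: ht.
Qed.

Lemma mem_univ (s : nat -> nat) N t k i : (t <= N)%N -> (k <= t)%N -> (i < s t)%N ->
  (t, k, i) \in univ s N.
Proof.
move=> htN hkt his; apply/flatten_mapP; exists t; first by rewrite mem_iota.
by apply/allpairsP; exists (k, i); rewrite !mem_iota /=.
Qed.

Lemma sum_iota_const (R : realType) (m : nat) (c : R) :
  \sum_(i <- iota 0 m) c = m%:R * c.
Proof.
elim: m => [|m IH]; first by rewrite big_nil mul0r.
by rewrite -addn1 iotaD big_cat big_seq1 IH natrD mulrDl mul1r.
Qed.

Lemma sum_weights (R : realType) (s : nat -> nat) (N : nat) :
  (forall t, (0 < s t)%N) ->
  \sum_(e <- univ s N) ((s e.1.1)%:R : R)^-1 <= (N.+1 ^ 2)%:R.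
Proof.
move=> spos; rewrite /univ big_flatten big_map.
rewrite (eq_bigr (fun t => (t.+1)%:R)); last first.
  move=> t _; rewrite /layer big_allpairs_dep.
  rewrite (eq_bigr (fun k => 1)); last first.
    move=> k _; rewrite (eq_bigr (fun _ => ((s t)%:R : R)^-1)) // sum_iota_const.
    by rewrite mulfV // pnatr_eq0 -lt0n; exact: spos.
  by rewrite sum_iota_const mulr1.
apply: (@le_trans _ _ (\sum_(t <- iota 0 N.+1) (N.+1)%:R)).
  rewrite big_seq [X in _ <= X]big_seq; apply: ler_sum => t.
  by rewrite mem_iota ler_nat add0n.
by rewrite sum_iota_const -natrM.
Qed.



Definition clip1 (R : realType) (r : R) : R := Num.max (-1) (Num.min 1 r).

Definition clipc (R : realType) (z : R[i]) : R[i] :=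
  Complex (clip1 (complex.Re z)) (clip1 (complex.Im z)).

Lemma clip1_cases (R : realType) (r : R) :
  (clip1 r = r /\ -1 <= r <= 1) \/ (clip1 r = 1 /\ 1 < r) \/ (clip1 r = -1 /\ r < -1).
Proof.
rewrite /clip1; have [h1|h1] := boolP (r <= 1).
  rewrite (min_r h1); have [h2|h2] := boolP (-1 <= r).
    by left; rewrite (max_r h2); split => //; apply/andP.
  rewrite -ltNge in h2.
  by right; right; rewrite (max_l (ltW h2)).
rewrite -ltNge in h1.
rewrite (min_l (ltW h1)) max_r; last by lra.
by right; left.
Qed.

Lemma clip1_in (R : realType) (r : R) : -1 <= clip1 r <= 1.
Proof. case: (clip1_cases r) => [[-> ->]|[[-> _]|[-> _]]] //; apply/andP; split; lra. Qed.

Lemma clipc_in (R : realType) (z : R[i]) : insq (clipc z).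
Proof. by split; apply: clip1_in. Qed.

Definition expt (R : realType) (X : Type) (g : nat -> nat -> X -> R[i])
  (e : nat * nat * nat) (x : X) : R[i] :=
  clipc ((2 ^+ e.1.2 : R)%:C%C * g e.1.1 e.2 x).

Definition wgt (R : realType) (s : nat -> nat) (e : nat * nat * nat) : R :=
  ((s e.1.1)%:R)^-1.

Definition piA (R : realType) (X : Type) (g : nat -> nat -> X -> R[i])
  (xs : nat -> X) (mu : nat -> R[i]) (e : nat * nat * nat) (t : nat) : R[i] :=
  if (e.1.1 <= t)%N then expt g e (xs t) else mu t.

Definition mix (R : realType) (X : Type) (s : nat -> nat) (g : nat -> nat -> X -> R[i])
  (n : nat) (xs : nat -> X) (ys : nat -> R[i]) (mu : nat -> R[i]) (x : X) : R[i] :=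
  let q := potq (wgt R s) (piA g xs mu) ys n in
  let W := \sum_(e <- univ s n) q e in
  Complex ((\sum_(e <- univ s n) q e * complex.Re (expt g e x)) / W)
          ((\sum_(e <- univ s n) q e * complex.Im (expt g e x)) / W).

Arguments mix : simpl never.
Arguments potq : simpl never.

Fixpoint musq (R : realType) (X : Type) (s : nat -> nat) (g : nat -> nat -> X -> R[i])
  (xs : nat -> X) (ys : nat -> R[i]) (n : nat) : seq R[i] :=
  match n with
  | 0 => [::]
  | n'.+1 => let m := musq s g xs ys n' in
             rcons m (mix s g n' xs ys (fun t => nth 0 m t) (xs n'))
  end.

Definition stratA (R : realType) (X : topologicalType) (s : nat -> nat)
  (g : nat -> nat -> X -> R[i]) : strategy R X :=
  fun hist x =>
    let n := size hist in
    let xs t := if (t < n)%N then (nth (x, 0) hist t).1 else x in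
    let ys t := (nth (x, 0) hist t).2 in
    nth 0 (musq s g xs ys n.+1) n.

Lemma mix_ext (R : realType) (X : Type) (s : nat -> nat) (g : nat -> nat -> X -> R[i])
  n xs xs' ys ys' mu mu' x :
  (forall t, (t < n)%N -> [/\ xs t = xs' t, ys t = ys' t & mu t = mu' t]) ->
  mix s g n xs ys mu x = mix s g n xs' ys' mu' x.
Proof.
move=> h.
have hq : potq (wgt R s) (piA g xs mu) ys n = potq (wgt R s) (piA g xs' mu') ys' n.
  apply: funext => e; rewrite /potq.
  have -> : \sum_(t < n) lossc (ys t) (piA g xs mu e t) =
            \sum_(t < n) lossc (ys' t) (piA g xs' mu' e t).
    apply: eq_bigr => t _; have [h1 h2 h3] := h t (ltn_ord t).
    by rewrite /piA h1 h2 h3.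
  by [].
by rewrite /mix hq.
Qed.

Lemma size_musq (R : realType) (X : Type) s (g : nat -> nat -> X -> R[i]) xs ys n :
  size (musq s g xs ys n) = n.
Proof. by elim: n => //= n IH; rewrite size_rcons IH. Qed.

Lemma musq_ext (R : realType) (X : Type) s (g : nat -> nat -> X -> R[i]) xs xs' ys ys' n :
  (forall t, (t < n)%N -> xs t = xs' t) -> (forall t, (t.+1 < n)%N -> ys t = ys' t) ->
  musq s g xs ys n = musq s g xs' ys' n.
Proof.
elim: n => //= n IH hx hy.
have -> : musq s g xs ys n = musq s g xs' ys' n.
  by apply: IH => t ht; [apply: hx | apply: hy]; apply: ltnW.
rewrite (hx n (ltnSn n)); congr rcons; apply: mix_ext => t ht; split => //.
  by apply: hx; apply: ltnW.
by apply: hy.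
Qed.



Definition muA (R : realType) (X : Type) s (g : nat -> nat -> X -> R[i]) xs ys (n : nat) : R[i] :=
  nth 0 (musq s g xs ys n.+1) n.

Lemma nth_musq (R : realType) (X : Type) s (g : nat -> nat -> X -> R[i]) xs ys n t :
  (t < n)%N -> nth 0 (musq s g xs ys n) t = muA s g xs ys t.
Proof.
elim: n => // n IH ht; rewrite /= nth_rcons size_musq.
case: (ltnP t n) => h; first exact: IH.
have -> : t = n by apply/eqP; rewrite eqn_leq h -ltnS ht.
by rewrite eqxx /muA /= nth_rcons size_musq ltnn eqxx.
Qed.

Lemma muA_eq (R : realType) (X : Type) s (g : nat -> nat -> X -> R[i]) xs ys n :
  muA s g xs ys n = mix s g n xs ys (muA s g xs ys) (xs n).
Proof.
rewrite /muA /= nth_rcons size_musq ltnn eqxx.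
by apply: mix_ext => t ht; split => //; apply: nth_musq.
Qed.

Lemma pred_move_eq (R : realType) (X : topologicalType) s (g : nat -> nat -> X -> R[i])
  (x : nat -> X) (y : nat -> R[i]) n :
  pred_move (stratA s g) x y n = muA s g x y n.
Proof.
rewrite /pred_move /stratA /muA size_map size_iota.
congr nth; apply: musq_ext => t ht.
  case: ifP => h; last by have -> : t = n by apply/eqP; rewrite eqn_leq -ltnS ht leqNgt h.
  by rewrite (nth_map 0%N) ?size_iota // nth_iota.
by rewrite (nth_map 0%N) ?size_iota // nth_iota.
Qed.

Lemma potq_ge0 (R : realType) (E : Type) (w : E -> R) pi ys n e :
  0 <= w e -> 0 <= potq w pi ys n e.
Proof. by move=> h; rewrite /potq mulr_ge0 ?expR_ge0. Qed.

Lemma wgt_gt0 (R : realType) s e : (0 < s e.1.1)%N -> 0 < wgt R s e.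
Proof. by move=> h; rewrite /wgt invr_gt0 ltr0n. Qed.

Lemma W_pos (R : realType) (X : Type) s (g : nat -> nat -> X -> R[i]) xs ys mu n :
  (forall t, (0 < s t)%N) ->
  0 < \sum_(e <- univ s n) potq (wgt R s) (piA g xs mu) ys n e.
Proof.
move=> spos.
have h0 : (0, 0, 0)%N \in univ s n by apply: mem_univ.
have := @le_sum_mem R _ (univ s n) (potq (wgt R s) (piA g xs mu) ys n) _
  (fun e => @potq_ge0 R _ (wgt R s) (piA g xs mu) ys n e (ltW (@wgt_gt0 R s e (spos e.1.1)))) h0.
apply: lt_le_trans.
by rewrite /potq mulr_gt0 ?expR_gt0 // wgt_gt0.
Qed.

Lemma convex_bound (R : realType) (E : Type) (U : seq E) (q r : E -> R) :
  (forall e, 0 <= q e) -> (forall e, -1 <= r e <= 1) ->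
  0 < \sum_(e <- U) q e ->
  -1 <= (\sum_(e <- U) q e * r e) / \sum_(e <- U) q e <= 1.
Proof.
move=> q0 r1 W0; rewrite ler_pdivlMr // ler_pdivrMr // mulN1r mul1r.
apply/andP; split.
  rewrite -sumrN; apply: ler_sum => e _; have /andP[a b] := r1 e.
  by rewrite -mulrN1 ler_wpM2l.
apply: ler_sum => e _; have /andP[a b] := r1 e.
by rewrite -[X in _ <= X]mulr1 ler_wpM2l.
Qed.

Lemma mix_insq (R : realType) (X : Type) s (g : nat -> nat -> X -> R[i]) n xs ys mu x :
  (forall t, (0 < s t)%N) -> insq (mix s g n xs ys mu x).
Proof.
move=> spos; rewrite /mix; split => /=; apply: convex_bound;
  try (by move=> e; apply: potq_ge0; apply: ltW; apply: wgt_gt0);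
  try (by apply: W_pos); move=> e; have [] := clipc_in (R := R)
     ((2 ^+ e.1.2 : R)%:C%C * g e.1.1 e.2 x) => //.
Qed.

Lemma mem_univ_le (s : nat -> nat) n e : e \in univ s n -> (e.1.1 <= n)%N.
Proof.
move=> /flatten_mapP[t ht /mem_layer[-> _ _]].
by rewrite mem_iota add0n ltnS in ht.
Qed.

Lemma split_sum_eq (R : realType) (E : eqType) (U1 U2 : seq E) (q a b : E -> R) (m : R) :
  (\sum_(e <- U1) q e) * m = \sum_(e <- U1) q e * a e ->
  {in U1, forall e, b e = a e} -> {in U2, forall e, b e = m} ->
  (\sum_(e <- U1 ++ U2) q e) * m = \sum_(e <- U1 ++ U2) q e * b e.
Proof.
move=> h h1 h2; rewrite !big_cat /= mulrDl h.
rewrite [X in _ = X + _]big_seq [X in _ = _ + X]big_seq.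
rewrite [X in _ = X + _](eq_bigr (fun e => q e * a e)); last by move=> e /h1 ->.
rewrite [X in _ = _ + X](eq_bigr (fun e => q e * m)); last by move=> e /h2 ->.
by rewrite -big_seq -big_seq mulr_suml.
Qed.

Lemma mix_eq (R : realType) (X : Type) s (g : nat -> nat -> X -> R[i]) x y N n :
  (forall t, (0 < s t)%N) -> (n <= N)%N ->
  let mu := muA s g x y in
  let pi := piA g x mu in
  (\sum_(e <- univ s N) potq (wgt R s) pi y n e) * complex.Re (mu n) =
     \sum_(e <- univ s N) potq (wgt R s) pi y n e * complex.Re (pi e n) /\
  (\sum_(e <- univ s N) potq (wgt R s) pi y n e) * complex.Im (mu n) =
     \sum_(e <- univ s N) potq (wgt R s) pi y n e * complex.Im (pi e n).
Proof.
move=> spos hn mu pi.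
have Wn := @W_pos R X s g x y mu n spos.
have hm := muA_eq s g x y n; rewrite -/mu in hm.
rewrite (univ_split s hn).
have h1 : {in univ s n, forall e, pi e n = expt g e (x n)}.
  by move=> e /mem_univ_le he; rewrite /pi /piA he.
have h2 : {in flatten [seq layer s t | t <- iota n.+1 (N - n)], forall e, pi e n = mu n}.
  by move=> e /mem_rest he; rewrite /pi /piA leqNgt he.
split; apply: split_sum_eq.
- rewrite hm /mix /=; rewrite mulrC -mulrA mulVf ?mulr1 //; exact: lt0r_neq0.
- by move=> e /h1 ->.
- by move=> e /h2 ->.
- rewrite hm /mix /=; rewrite mulrC -mulrA mulVf ?mulr1 //; exact: lt0r_neq0.
- by move=> e /h1 ->.
- by move=> e /h2 ->.
Qed.



Lemma clip_loss (R : realType) (y f gg d : R) : -1 <= y <= 1 -> `|f - gg| <= d -> d <= 1 ->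
  (y - clip1 gg) ^+ 2 <= (y - f) ^+ 2 + 7 * d.
Proof.
move=> /andP[y1 y2] hd d1; have d0 : 0 <= d by exact: le_trans (normr_ge0 _) hd.
move: hd; rewrite ler_norml => /andP[hd1 hd2].
case: (clip1_cases gg) => [[-> /andP[g1 g2]]|[[-> g1]|[-> g1]]].
- have e : (y - gg) ^+ 2 = (y - f) ^+ 2 + 2 * (y - f) * (f - gg) + (f - gg) ^+ 2 by ring.
  rewrite e; nra.
- case: (leP 1 f) => hf; first nra.
  have e : (y - 1) ^+ 2 = (y - f) ^+ 2 + 2 * (y - f) * (f - 1) + (f - 1) ^+ 2 by ring.
  rewrite e; nra.
- case: (leP f (-1)) => hf; first nra.
  have e : (y - -1) ^+ 2 = (y - f) ^+ 2 + 2 * (y - f) * (f - -1) + (f - -1) ^+ 2 by ring.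
  rewrite e; nra.
Qed.

Lemma cmod_sub_sqr (R : realType) (a b : R[i]) : cmod (a - b) ^+ 2 = lossc a b.
Proof. by rewrite cmod_sqr; case: a b => [a1 a2] [b1 b2]. Qed.

Lemma comp_bound (R : realType) (y Fv Gv : R[i]) (d : R) :
  insq y -> cmod (Fv - Gv) <= d -> d <= 1 ->
  lossc y (clipc Gv) <= cmod (y - Fv) ^+ 2 + 14 * d.
Proof.
move=> [hy1 hy2] hd d1; rewrite cmod_sub_sqr /lossc.
have hre : `|complex.Re Fv - complex.Re Gv| <= d.
  apply: le_trans _ hd; apply: le_trans (Re_le_cmod _).
  by case: (Fv) (Gv) => [a b] [c e].
have him : `|complex.Im Fv - complex.Im Gv| <= d.
  apply: le_trans _ hd; apply: le_trans (Im_le_cmod _).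
  by case: (Fv) (Gv) => [a b] [c e].
have := clip_loss hy1 hre d1; have := clip_loss hy2 him d1.
rewrite /clipc /=; lra.
Qed.



Definition epst (R : realType) (t : nat) : R := ((2 : R) ^+ t.+1)^-1.

Lemma log2_pow (R : realType) (m : nat) : log2 ((2 : R) ^+ m) = m%:R.
Proof.
have ln2 : 0 < ln (2 : R) by rewrite ln_gt0 // ltr1n.
rewrite /log2 lnXn // -[ln 2 *+ m]mulr_natr mulrAC mulfV ?mul1r //.
exact: lt0r_neq0.
Qed.

Lemma nets_exist (R : realType) (X : topologicalType) (Fs : set (X -> R[i]))
  (nF : (X -> R[i]) -> R) (L M : R) :
  banach_compact_embedded Fs nF ->
  (forall eps : R, 0 < eps -> eps <= 2^-1 ->
       entropy (unit_ball Fs nF) eps <= L * (log2 eps^-1) `^ M) ->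
  exists (s : nat -> nat) (g : nat -> nat -> X -> R[i]),
    [/\ forall t, (0 < s t)%N,
        forall t i, (i < s t)%N -> unit_ball Fs nF (g t i),
        forall t f, unit_ball Fs nF f -> exists2 i, (i < s t)%N & supdist f (g t i) <= epst R t
      & forall t, ln ((s t)%:R : R) <= L * (t.+1)%:R `^ M * ln 2].
Proof.
move=> [FsCX [Fs0 [_ [_ [nFpos [_ [_ [_ cpt]]]]]]]] hent.
have U0 : unit_ball Fs nF (fun _ => 0).
  split => //; have [_ h] := nFpos _ Fs0; by rewrite (proj2 h).
have hP : forall t : nat, exists p : nat * (nat -> X -> R[i]),
    [/\ (0 < p.1)%N,
        forall i, (i < p.1)%N -> unit_ball Fs nF (p.2 i),
        forall f, unit_ball Fs nF f -> exists2 i, (i < p.1)%N & supdist f (p.2 i) <= epst R t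
      & ln ((p.1)%:R : R) <= L * (t.+1)%:R `^ M * ln 2].
  move=> t.
  have e0 : 0 < epst R t by rewrite /epst invr_gt0 exprn_gt0.
  have e1 : epst R t <= 2^-1.
    rewrite /epst lef_pV2 ?posrE ?exprn_gt0 //.
    by rewrite exprS -[X in X <= _]mulr1 ler_wpM2l // exprn_ege1 // ler1n.
  have hex := net_exists cpt U0 e0.
  have := hent _ e0 e1; rewrite /epst invrK log2_pow => he.
  have [n [npos [[G [GU Gnet]] hln]]] := good_net hex U0 he.
  pose G' (i : nat) := G (insubd (Ordinal npos) i).
  exists (n, G'); split => //=.
  - move=> i hi; exact: GU.
  - move=> f uf; have [k hk] := Gnet f uf; exists (val k); first exact: ltn_ord.
    by rewrite /G' valKd.
have [fp hfp] := choice hP.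
exists (fun t => (fp t).1), (fun t => (fp t).2); split.
- by move=> t; case: (hfp t).
- by move=> t; case: (hfp t).
- by move=> t; case: (hfp t).
- by move=> t; case: (hfp t).
Qed.

Lemma lossc_le8 (R : realType) (y m : R[i]) : insq y -> insq m -> lossc y m <= 8.
Proof.
move=> [/andP[a1 a2] /andP[b1 b2]] [/andP[c1 c2] /andP[d1 d2]]; rewrite /lossc; nra.
Qed.

Lemma sum_cond (R : realType) (N t : nat) (c : R) : 0 <= c ->
  \sum_(n < N) (if (n < t)%N then c else 0) <= t%:R * c.
Proof.
move=> c0.
suff : \sum_(n < N) (if (n < t)%N then c else 0) = (minn N t)%:R * c.
  move=> ->; apply: ler_wpM2r => //; rewrite ler_nat; exact: geq_minr.
elim: N => [|N IH]; first by rewrite big_ord0 min0n mul0r.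
rewrite big_ord_recr /= IH.
case: ifP => h.
  have -> : minn N.+1 t = (minn N t).+1 by lia.
  by rewrite -[(minn N t).+1]addn1 natrD mulrDl mul1r.
have -> : minn N.+1 t = minn N t by lia.
by rewrite addr0.
Qed.

Lemma approx_net (R : realType) (X : topologicalType) (Fs : set (X -> R[i]))
  (nF : (X -> R[i]) -> R) (s : nat -> nat) (g : nat -> nat -> X -> R[i]) (t k : nat) F :
  banach_compact_embedded Fs nF ->
  (forall t f, unit_ball Fs nF f -> exists2 i, (i < s t)%N & supdist f (g t i) <= epst R t) ->
  (forall t i, (i < s t)%N -> unit_ball Fs nF (g t i)) ->
  Fs F -> nF F <= 2 ^+ k ->
  exists2 i0, (i0 < s t)%N &
    forall x', cmod (F x' - (2 ^+ k : R)%:C%C * g t i0 x') <= 2 ^+ k * epst R t.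
Proof.
move=> [FsCX [_ [_ [FsZ [_ [nFZ _]]]]]] hnet hgU hF hk.
have p2 : 0 < (2 : R) ^+ k by rewrite exprn_gt0.
pose c : R[i] := (((2 : R) ^+ k)^-1)%:C%C.
pose Fa := fun x => c * F x.
have hFa : Fs Fa by apply: FsZ.
have uFa : unit_ball Fs nF Fa.
  split => //; rewrite /Fa nFZ // /c cmod_real ger0_norm; last by rewrite invr_ge0 ltW.
  by rewrite mulrC ler_pdivrMr // mul1r.
have [i0 hi0 hd] := hnet t Fa uFa.
exists i0 => // x'.
have hg : CX (g t i0) by apply: FsCX; case: (hgU t i0 hi0).
have hpt := supdist_ub (FsCX _ hFa) hg x'.
have -> : F x' - (2 ^+ k : R)%:C%C * g t i0 x' = (2 ^+ k : R)%:C%C * (Fa x' - g t i0 x').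
  rewrite mulrBr /Fa /c mulrA -rmorphM mulfV ?lt0r_neq0 // rmorph1 mul1r //.
rewrite cmodM cmod_real ger0_norm; last exact: ltW.
rewrite ler_pM2l //.
exact: le_trans hpt hd.
Qed.

Lemma regret_main (R : realType) (X : topologicalType) (Fs : set (X -> R[i]))
  (nF : (X -> R[i]) -> R) (L M : R) (s : nat -> nat) (g : nat -> nat -> X -> R[i])
  (N : nat) F (x : nat -> X) (y : nat -> R[i]) (k t : nat) :
  banach_compact_embedded Fs nF -> 0 <= L ->
  (forall t, (0 < s t)%N) ->
  (forall t i, (i < s t)%N -> unit_ball Fs nF (g t i)) ->
  (forall t f, unit_ball Fs nF f -> exists2 i, (i < s t)%N & supdist f (g t i) <= epst R t) ->
  (forall t, ln ((s t)%:R : R) <= L * (t.+1)%:R `^ M * ln 2) ->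
  (2 <= N)%N -> Fs F -> (forall n, cmod (y n) <= 1) -> nF F <= 2 ^+ k -> (k <= t)%N ->
  N%:R * (2 ^+ k * epst R t) <= 2^-1 ->
  \sum_(n < N) lossc (y n) (muA s g x y n) <=
  \sum_(n < N) cmod (y n - F (x n)) ^+ 2 + 7 + 8 * t%:R +
     64 * (ln ((N.+1 ^ 2)%:R) + L * (t.+1)%:R `^ M * ln 2).
Proof.
move=> hB L0 spos hgU hnet hln hN hF hy hk hkt hNd.
have i2 : (2 : R)^-1 * 2 = 1 by rewrite mulVf.
set mu := muA s g x y.
have hyq : forall n, insq (y n) by move=> n; apply: insq_y.
have hmu : forall n, insq (mu n) by move=> n; rewrite /mu muA_eq; apply: mix_insq.
have hpi : forall e n, insq (piA g x mu e n).
  by move=> e n; rewrite /piA; case: ifP => _ //; apply: clipc_in.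
have ln2 : 0 < ln (2 : R) by rewrite ln_gt0 // ltr1n.
have Tpos : 0 <= 64 * (ln ((N.+1 ^ 2)%:R) + L * (t.+1)%:R `^ M * ln 2).
  rewrite mulr_ge0 // addr_ge0 // ?ln_ge0 ?ler1n ?expn_gt0 //.
  by rewrite mulr_ge0 // ?mulr_ge0 // ?powR_ge0 // ltW.
have S0 : 0 <= \sum_(n < N) cmod (y n - F (x n)) ^+ 2 by apply: sumr_ge0 => n _; exact: sqr_ge0.
case: (leqP t N) => htN; last first.
  apply: (@le_trans _ _ (8 * t%:R)).
    apply: (@le_trans _ _ (\sum_(n < N) (8 : R))).
      by apply: ler_sum => n _; apply: lossc_le8.
    rewrite sumr_const card_ord -[8 *+ N]mulr_natr ler_wpM2l // ler_nat; exact: ltnW.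
  lra.
have [i0 hi0 happ] := approx_net t hB hnet hgU hF hk.
set d := 2 ^+ k * epst R t in hNd happ *.
have d0 : 0 <= d by rewrite /d mulr_ge0 ?exprn_ge0 // /epst invr_ge0 exprn_ge0.
have d1 : d <= 1.
  have : 2 * d <= N%:R * d by rewrite ler_wpM2r // ler_nat.
  lra.
have e0U : (t, k, i0) \in univ s N by apply: mem_univ.
have we0 : 0 < wgt R s (t, k, i0) by apply: wgt_gt0.
have hA := aggregate (U := univ s N) (w := wgt R s) (pi := piA g x mu) (y := y) (mu := mu) (N := N)
   (fun e => ltW (@wgt_gt0 R s e (spos e.1.1))) hyq hmu hpi
   (fun n hn => @mix_eq R X s g x y N n spos (ltnW hn)) e0U we0.
apply: (le_trans hA).
have hW : ln (\sum_(e <- univ s N) wgt R s e) <= ln ((N.+1 ^ 2)%:R).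
  rewrite ler_ln ?posrE ?ltr0n ?expn_gt0 //; first exact: sum_weights.
  apply: (lt_le_trans we0); apply: le_sum_mem => // e; apply: ltW; apply: wgt_gt0; exact: spos.
have hw0 : - ln (wgt R s (t, k, i0)) <= L * (t.+1)%:R `^ M * ln 2.
  by rewrite /wgt lnV ?opprK ?posrE ?ltr0n //; apply: hln.
have hpiS : \sum_(n < N) lossc (y n) (piA g x mu (t, k, i0) n) <=
    \sum_(n < N) cmod (y n - F (x n)) ^+ 2 + 7 + 8 * t%:R.
  apply: (@le_trans _ _ (\sum_(n < N) (cmod (y n - F (x n)) ^+ 2 + 14 * d +
                                        (if (n < t)%N then 8 else 0)))).
    apply: ler_sum => n _; rewrite /piA /=.
    case: ifP => h.
      rewrite leqNgt in h; rewrite (negbTE h) addr0.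
      by apply: comp_bound => //; apply: happ.
    move/negbT: h; rewrite -ltnNge => h; rewrite h.
    have := lossc_le8 (hyq n) (hmu n); have := sqr_ge0 (cmod (y n - F (x n))).
    lra.
  rewrite !big_split /= sumr_const card_ord.
  have := sum_cond N t (ler0n R 8).
  have : 14 * d *+ N <= 7.
    rewrite -[14 * d *+ N]mulr_natr -mulrA [d * _]mulrC; lra.
  lra.
lra.
Qed.



Lemma lt_pow2 (R : realType) (z : R) (m : nat) : 0 < z -> log2 z < m%:R -> z < 2 ^+ m.
Proof.
move=> z0 h.
have ln2 : 0 < ln (2 : R) by rewrite ln_gt0 // ltr1n.
rewrite -ltr_ln ?posrE ?exprn_gt0 // lnXn // -[ln 2 *+ m]mulr_natr.
by move: h; rewrite /log2 ltr_pdivrMr // [m%:R * _]mulrC.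
Qed.

Lemma log2_ge0 (R : realType) (z : R) : 1 <= z -> 0 <= log2 z.
Proof.
move=> h; rewrite /log2 divr_ge0 ?ln_ge0 //; last by rewrite ler1n.
Qed.

Lemma logp_ge0 (R : realType) (z : R) : 0 <= logp z.
Proof. by rewrite /logp; case: ifP => // h; apply: log2_ge0. Qed.

Lemma aux_mn (R : realType) (u v : R) : u <= v *+ 2 -> u *+ 2 <= v *+ 4.
Proof. rewrite -[u *+ 2]mulr_natr -[v *+ 2]mulr_natr -[v *+ 4]mulr_natr => h; lra. Qed.

Lemma final_numeric (R : realType) (L M a a' : R) (k j N : nat) :
  1 <= L -> 1 <= M -> 0 <= a -> 1 <= a' -> k%:R <= a + 1 -> j%:R <= a' + 1 ->
  ln ((N.+1 ^ 2)%:R : R) <= 4 * ln 2 * a' ->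
  7 + 8 * (k + j)%N%:R + 64 * (ln ((N.+1 ^ 2)%:R) + L * (k + j)%N.+1%:R `^ M * ln 2)
  <= (300 + 64 * 4 `^ M) * L * (a + a') `^ M.
Proof.
move=> L1 M1 a0 a1 hk hj hN.
set A := a + a'.
have A1 : 1 <= A by rewrite /A; lra.
have ln2 : 0 < ln (2 : R) by rewrite ln_gt0 // ltr1n.
have ln21 : ln (2 : R) <= 1.
  have := @le_ln1Dx R 1 ltac:(lra); by rewrite (_ : 1 + 1 = 2).
have hP : A <= A `^ M by apply: le1r_powR.
set P := A `^ M in hP *.
have ht : ((k + j)%N.+1)%:R <= 4 * A.
  rewrite -addn1 !natrD; rewrite /A; lra.
have hQ : 0 <= 4 `^ M :> R by apply: powR_ge0.
have hpow : ((k + j)%N.+1)%:R `^ M <= 4 `^ M * P.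
  rewrite /P -powRM ?ler0n //; last by lra.
  by apply: ge0_ler_powR => //; [lra | rewrite nnegrE ler0n | rewrite nnegrE; lra].
set Q := 4 `^ M in hQ hpow *.
set T := ((k + j)%N.+1)%:R `^ M in hpow *.
have hT0 : 0 <= T by apply: powR_ge0.
have h1 : L * T * ln 2 <= L * Q * P.
  have : L * T * ln 2 <= L * T by rewrite -[X in _ <= X]mulr1 ler_wpM2l // mulr_ge0 //; lra.
  move=> h; apply: (le_trans h); rewrite -mulrA ler_wpM2l //; lra.
have h2 : ln ((N.+1 ^ 2)%:R : R) <= 4 * A.
  apply: (le_trans hN); have : 4 * ln 2 * a' <= 4 * a' by nra.
  rewrite /A; lra.
have hkj : ((k + j)%N)%:R <= 4 * A by move: ht; rewrite -addn1 natrD; lra.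
have hLP : P <= L * P by nra.
have hLQP : 0 <= L * Q * P by rewrite !mulr_ge0 //; lra.
have e : (300 + 64 * Q) * L * P = 300 * (L * P) + 64 * (L * Q * P) by ring.
rewrite e; nra.
Qed.

Unset Implicit Arguments.

Theorem mainTheorem10 (R : realType) :
  exists C : R -> R,
  forall (X : topologicalType) (Fs : set (X -> R[i])) (nF : (X -> R[i]) -> R)
         (L M : R),
    inhabited X ->
    banach_compact_embedded Fs nF ->
    1 <= L -> 1 <= M ->
    (forall eps : R, 0 < eps -> eps <= 2^-1 ->
       entropy (unit_ball Fs nF) eps <= L * (log2 eps^-1) `^ M) ->
    exists S : strategy R X,
      forall (N : nat), (2 <= N)%N ->
      forall (F : X -> R[i]), Fs F ->
      forall (x : nat -> X) (y : nat -> R[i]), (forall n, cmod (y n) <= 1) ->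
        \sum_(n < N) cmod (y n - pred_move S x y n) ^+ 2
        <= \sum_(n < N) cmod (y n - F (x n)) ^+ 2
           + C M * L * (logp (nF F) + log2 N%:R) `^ M.
Proof.
exists (fun M => 300 + 64 * 4 `^ M).
move=> X Fs nF L M _ hB L1 M1 hent.
have [s [g [spos hgU hnet hln]]] := nets_exist hB hent.
exists (stratA s g) => N hN F hF x y hy.
rewrite (eq_bigr (fun n : 'I_N => lossc (y n) (muA s g x y n))); last first.
  by move=> n _; rewrite pred_move_eq cmod_sub_sqr.
have ln2 : 0 < ln (2 : R) by rewrite ln_gt0 // ltr1n.
have N0 : 0 < (N%:R : R) by rewrite ltr0n; apply: (leq_trans _ hN).
have N2 : (2 : R) <= N%:R by rewrite ler_nat.
set a := logp (nF F); set a' := log2 (N%:R : R).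
have a0 : 0 <= a by apply: logp_ge0.
have a1 : 1 <= a'.
  rewrite /a' /log2 ler_pdivlMr // mul1r ler_ln ?posrE //.
set k := (Num.truncn a).+1; set j := (Num.truncn a').+1.
have hkR : k%:R <= a + 1.
  by rewrite /k -addn1 natrD lerD2r truncn_le.
have hjR : j%:R <= a' + 1.
  by rewrite /j -addn1 natrD lerD2r truncn_le; lra.
have hk : nF F <= 2 ^+ k.
  have [h|h] := boolP (1 <= nF F).
    apply: ltW; apply: (@lt_pow2 R (nF F) k); first by lra.
    have -> : log2 (nF F) = a by rewrite /a /logp h.
    exact: truncnS_gt.
  rewrite -ltNge in h; apply: (le_trans (ltW h)); apply: exprn_ege1; lra.
have hNj : (N%:R : R) < 2 ^+ j by apply: lt_pow2 => //; exact: truncnS_gt.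
have p2k : 0 < (2 : R) ^+ k by rewrite exprn_gt0.
have p2j : 0 < (2 : R) ^+ j by rewrite exprn_gt0.
have hNd : N%:R * (2 ^+ k * epst R (k + j)) <= 2^-1.
  have -> : (2 : R) ^+ k * epst R (k + j) = (2 * 2 ^+ j)^-1.
    rewrite /epst exprS exprD mulrA [2 * 2 ^+ k]mulrC -mulrA invfM mulrA mulfV ?mul1r //.
  rewrite ler_pdivrMr ?mulr_gt0 // mulrA mulVf ?mul1r; first exact: ltW.
  by rewrite pnatr_eq0.
have hlnN : ln ((N.+1 ^ 2)%:R : R) <= 4 * ln 2 * a'.
  have -> : 4 * ln 2 * a' = ln (N%:R : R) *+ 4.
    rewrite /a' /log2 -[ln _ *+ 4]mulr_natr; field; exact: lt0r_neq0.
  rewrite natrX lnXn ?ltr0n //.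
  have : ln ((N.+1)%:R : R) <= ln (N%:R ^+ 2 : R).
    rewrite ler_ln ?posrE ?ltr0n ?exprn_gt0 // -natrX ler_nat.
    rewrite expnS expn1; apply: (leq_trans _ (leq_mul hN (leqnn N))).
    by rewrite mul2n -addnn -addn1 leq_add2l; exact: (leq_trans _ hN).
  rewrite lnXn; last exact: N0.
  exact: aux_mn.
have := @regret_main R X Fs nF L M s g N F x y k (k + j)%N hB (le_trans ler01 L1) spos hgU hnet hln hN hF hy hk
   (leq_addr j k) hNd.
have := final_numeric L1 M1 a0 a1 hkR hjR hlnN.
have e : forall A B C D : R, A + B + C + D = A + (B + C + D) by move=> *; rewrite !addrA.
move=> h1; rewrite e => h2; apply: (le_trans h2); rewrite lerD2l; exact: h1.
Qed.
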